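(* Suppose the weights satisfy the discrete Pearson equations $\theta(k+1)w^{(a)}(k+1)=\sigma^{(a)}(k)w^{(a)}(k)$, $k\in\mathbb N_0$, $a\in\{1,2\}$, where $\theta,\sigma^{(1)},\sigma^{(2)}$ are polynomials, $\theta(0)=0$, $\deg\theta=N$ and $\max(\deg\sigma^{(1)},\deg\sigma^{(2)})=M$. Then the Laguerre--Freud matrix $\Psi:=\Pi^{-1}\theta(T)$ is a banded matrix with lower bandwidth $2M$ and upper bandwidth $N$, i.e. $\Psi=(\Lambda^\top)^{2M}\psi^{(-2M)}+\cdots+\psi^{(N)}\Lambda^N$ with diagonal matrices $\psi^{(j)}$, and the following connection formulas hold: \[ \theta(z)B(z-1)=\Psi B(z),\qquad (A^{(a)}(z+1))^\top\sigma^{(a)}(z)=(A^{(a)}(z))^\top\Psi,\quad a\in\{1,2\}. \]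
   Context: Let $w^{(1)},w^{(2)}:\mathbb N_0\to\mathbb C$ be weights, $X(x)=(1,x,x^2,\dots)^\top$, $X^{(1)}(x)=(1,0,x,0,x^2,\dots)^\top$, $X^{(2)}(x)=(0,1,0,x,0,\dots)^\top$, and $\mathscr M=\sum_k X(k)(w^{(1)}(k)X^{(1)}(k)+w^{(2)}(k)X^{(2)}(k))^\top$ the moment matrix (series absolutely convergent). Assume all leading principal minors of $\mathscr M$ are nonzero, so $\mathscr M=S^{-1}H\tilde S^{-\top}$ with $S,\tilde S$ lower unitriangular and $H$ diagonal. Type II polynomials: $B=SX$; type I polynomials: $A^{(a)}=H^{-1}\tilde SX^{(a)}$. $\Lambda$ has ones on the first superdiagonal; $T=S\Lambda S^{-1}$ (so $TB(z)=zB(z)$). $L$ is the Pascal matrix $L_{n,m}=\binom nm$ for $n\ge m$, and $\Pi^{-1}=SL^{-1}S^{-1}$. *)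

(* Defs.v *)
From HB Require Import structures.
From mathcomp Require Import all_boot all_order all_algebra.
From mathcomp Require Import boolp classical_sets reals topology normedtype sequences.
From mathcomp Require Import complex.

Set Implicit Arguments.
Unset Strict Implicit.
Unset Printing Implicit Defensive.

Import Order.TTheory GRing.Theory Num.Theory.
Import numFieldTopology.Exports numFieldNormedType.Exports.
Local Open Scope ring_scope.
Local Open Scope complex_scope.

Section Defs.
Variable R : realType.
Local Notation C := R[i].

Definition imat := nat -> nat -> C.
Definition ivec := nat -> C.

Definition cmod (z : C) : R := Num.sqrt (complex.Re z ^+ 2 + complex.Im z ^+ 2).

Definition abs_summable (u : nat -> C) : Prop :=
  cvgn (series (fun k => cmod (u k))).

Definition csum (u : nat -> C) : C :=
  (limn (series (fun k => complex.Re (u k)))) +i* (limn (series (fun k => complex.Im (u k)))).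

Definition fin_supp (u : nat -> C) : Prop :=
  exists N : nat, forall j, (N <= j)%N -> u j = 0.

(* sum of a finitely supported sequence; (junk value 0 otherwise) *)
Definition fsum (u : nat -> C) : C :=
  match pselect (fin_supp u) with
  | left h => \sum_(j < projT1 (cid h)) u j
  | right _ => 0
  end.

(* product of infinite matrices (meaningful for row-finite left factors) *)
Definition mmul (A B : imat) : imat := fun n m => fsum (fun j => A n j * B j m).
Definition mvmul (A : imat) (v : ivec) : ivec := fun n => fsum (fun j => A n j * v j).
Definition vmmul (v : ivec) (A : imat) : ivec := fun m => fsum (fun n => v n * A n m).

Definition idm : imat := fun n m => (n == m)%:R.
Definition trm (A : imat) : imat := fun n m => A m n.
Definition mpow (A : imat) (k : nat) : imat := iter k (mmul A) idm.
Definition polymx (p : {poly C}) (A : imat) : imat :=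
  fun n m => \sum_(i < size p) p`_i * mpow A i n m.

Definition trunc (A : imat) (n : nat) : 'M[C]_n := \matrix_(i < n, j < n) A i j.

(* inverse of an (invertible) lower triangular infinite matrix, computed on
   finite leading truncations *)
Definition ltinv (A : imat) : imat :=
  fun n m => (invmx (trunc A (maxn n m).+1)) (inord n) (inord m).

Definition lower_unitriangular (A : imat) : Prop :=
  forall n m, ((n < m)%N -> A n m = 0) /\ A n n = 1.
Definition diagonal_mx (A : imat) : Prop :=
  forall n m, n != m -> A n m = 0.

Definition Lam : imat := fun n m => (m == n.+1)%:R.
Definition pascal : imat := fun n m => ('C(n, m))%:R.

Definition Xv (x : C) : ivec := fun n => x ^+ n.
Definition X1v (x : C) : ivec := fun n => if odd n then 0 else x ^+ n./2.
Definition X2v (x : C) : ivec := fun n => if odd n then x ^+ n./2 else 0.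

Definition moment_term (w1 w2 : nat -> C) (n m : nat) : nat -> C :=
  fun k => (k%:R : C) ^+ n * (w1 k * X1v k%:R m + w2 k * X2v k%:R m).
Definition moment (w1 w2 : nat -> C) : imat :=
  fun n m => csum (moment_term w1 w2 n m).

Definition Jacobi (S : imat) : imat := mmul (mmul S Lam) (ltinv S).
Definition Piinv (S : imat) : imat := mmul (mmul S (ltinv pascal)) (ltinv S).
Definition LFmatrix (S : imat) (theta : {poly C}) : imat :=
  mmul (Piinv S) (polymx theta (Jacobi S)).

Definition typeII (S : imat) (z : C) : ivec := mvmul S (Xv z).
Definition typeI (H St : imat) (Xa : C -> ivec) (z : C) : ivec :=
  mvmul (mmul (ltinv H) St) (Xa z).

End Defs.

(* Main.v *)
Require Import Defs.
From HB Require Import structures.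
From mathcomp Require Import all_boot all_order all_algebra.
From mathcomp Require Import boolp classical_sets reals topology normedtype sequences.
From mathcomp Require Import complex.
From mathcomp Require Import functions.
From mathcomp Require Import zify ring.

Set Implicit Arguments.
Unset Strict Implicit.
Unset Printing Implicit Defensive.

Import Order.TTheory GRing.Theory Num.Theory.
Import numFieldTopology.Exports numFieldNormedType.Exports.
Local Open Scope ring_scope.
Local Open Scope complex_scope.

Section P1.
Variable R : realType.
Local Notation C := R[i].
Implicit Types (A B D : imat R).

Lemma sum_zero_tail (u : nat -> C) K K' : (K <= K')%N -> (forall j, (K <= j)%N -> u j = 0) ->
  \sum_(j < K') u j = \sum_(j < K) u j.
Proof.
move=> le hz. rewrite -!(big_mkord xpredT) (big_cat_nat (leq0n K) le) /=.
rewrite [X in _ + X]big1_seq ?addr0 // => j /andP[_]; rewrite mem_index_iota => /andP[h _]; exact: hz.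
Qed.

Lemma fsumE (u : nat -> C) K : (forall j, (K <= j)%N -> u j = 0) -> fsum u = \sum_(j < K) u j.
Proof.
move=> hz; rewrite /fsum; case: pselect => [h|nh]; last first.
  by exfalso; apply: nh; exists K.
case: (cid h) => K' hK' /=.
case: (leqP K K') => le.
  exact: sum_zero_tail.
by rewrite (sum_zero_tail (ltnW le) hK').
Qed.

Lemma fsum0 (u : nat -> C) : (forall j, u j = 0) -> fsum u = 0.
Proof. by move=> h; rewrite (fsumE (K:=0)) ?big_ord0. Qed.

Lemma sum_delta K p (f : nat -> C) : (p < K)%N -> \sum_(j < K) ((j : nat) == p)%:R * f j = f p.
Proof.
move=> hp; rewrite (bigD1 (Ordinal hp)) //= eqxx mul1r big1 ?addr0 // => j hj.
suff -> : ((j : nat) == p) = false by rewrite mul0r.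
apply/negP => /eqP e; move/negP: hj; apply; apply/eqP/val_inj; exact: e.
Qed.

Lemma sum_delta2 K p (f : nat -> C) : (p < K)%N -> \sum_(j < K) (p == (j : nat))%:R * f j = f p.
Proof. by move=> hp; under eq_bigr do rewrite eq_sym; exact: sum_delta. Qed.

Lemma sum_only K p (F : nat -> C) : (p < K)%N ->
  (forall j, (j < K)%N -> j != p -> F j = 0) -> \sum_(j < K) F j = F p.
Proof.
move=> hp hF; rewrite (bigD1 (Ordinal hp)) //= big1 ?addr0 // => j hj.
apply: hF => //; apply/negP => /eqP e; move/negP: hj; apply; apply/eqP/val_inj; exact: e.
Qed.

Lemma sum_ord_only K (i0 : 'I_K) (F : 'I_K -> C) :
  (forall j : 'I_K, (j : nat) != i0 -> F j = 0) -> \sum_(j < K) F j = F i0.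
Proof.
move=> hF; rewrite (bigD1 i0) //= big1 ?addr0 // => j hj.
Qed.

Definition ubw (A : imat R) (a : nat) := forall n m, (n + a < m)%N -> A n m = 0.
Definition lbw (A : imat R) (a : nat) := forall n m, (m + a < n)%N -> A n m = 0.

Lemma mmulE (A B : imat R) n m : mmul A B n m = fsum (fun j => A n j * B j m).
Proof. by []. Qed.

Lemma mmulE_u A B a n m K : ubw A a -> (n + a < K)%N ->
  mmul A B n m = \sum_(j < K) A n j * B j m.
Proof. by move=> hA hK; apply: fsumE => j hj; rewrite hA ?mul0r //; lia. Qed.

Lemma mmulE_l A B b n m K : lbw B b -> (m + b < K)%N ->
  mmul A B n m = \sum_(j < K) A n j * B j m.
Proof. by move=> hB hK; apply: fsumE => j hj; rewrite hB ?mulr0 //; lia. Qed.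

Lemma ubw_le A a b : (a <= b)%N -> ubw A a -> ubw A b.
Proof. by move=> h hA n m hm; apply: hA; lia. Qed.
Lemma lbw_le A a b : (a <= b)%N -> lbw A a -> lbw A b.
Proof. by move=> h hA n m hm; apply: hA; lia. Qed.

Lemma ubw_mmul A B a b : ubw A a -> ubw B b -> ubw (mmul A B) (a + b).
Proof.
move=> hA hB n m h; rewrite mmulE fsum0 // => j.
case: (leqP j (n + a)) => hj; first by rewrite (hB j m) ?mulr0 //; lia.
by rewrite hA ?mul0r.
Qed.

Lemma lbw_mmul A B a b : lbw A a -> lbw B b -> lbw (mmul A B) (a + b).
Proof.
move=> hA hB n m h; rewrite mmulE fsum0 // => j.
case: (ltnP (j + a) n) => hj; first by rewrite hA ?mul0r.
by rewrite (hB j m) ?mulr0 //; lia.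
Qed.

Lemma trm_mmul A B : trm (mmul A B) = mmul (trm B) (trm A).
Proof.
apply: funext => n; apply: funext => m; rewrite /trm !mmulE.
by congr fsum; apply: funext => j; rewrite mulrC.
Qed.

Lemma ubw_trm A a : lbw A a -> ubw (trm A) a.
Proof. by move=> h n m hm; apply: h. Qed.
Lemma lbw_trm A a : ubw A a -> lbw (trm A) a.
Proof. by move=> h n m hm; apply: h. Qed.

Lemma mmulA_gen A B D n m J K :
  (forall j, (J <= j)%N -> A n j = 0) ->
  (forall j k, (j < J)%N -> (K <= k)%N -> B j k * D k m = 0) ->
  mmul (mmul A B) D n m = mmul A (mmul B D) n m.
Proof.
move=> hA hBD.
have e1 : forall k, mmul A B n k = \sum_(j < J) A n j * B j k.
  by move=> k; apply: fsumE => j hj; rewrite hA ?mul0r.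
transitivity (\sum_(k < K) mmul A B n k * D k m).
  apply: fsumE => k hk; rewrite e1 mulr_suml big1 // => j _.
  by rewrite -mulrA hBD ?mulr0.
rewrite [RHS]mmulE (fsumE (K:=J)); last by move=> j hj; rewrite hA ?mul0r.
transitivity (\sum_(j < J) A n j * \sum_(k < K) B j k * D k m); last first.
  apply: eq_bigr => j _; congr (_ * _); rewrite mmulE (fsumE (K:=K)) //.
  by move=> k hk; apply: hBD.
under eq_bigr do rewrite e1 mulr_suml.
rewrite exchange_big /=; apply: eq_bigr => j _; rewrite mulr_sumr.
by apply: eq_bigr => k _; rewrite mulrA.
Qed.

Lemma mmulA_uu A B D a b : ubw A a -> ubw B b -> mmul (mmul A B) D = mmul A (mmul B D).
Proof.
move=> hA hB; apply: funext => n; apply: funext => m.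
apply: (mmulA_gen (J:=n + a + 1) (K:=n + a + b + 1)).
  by move=> j hj; apply: hA; lia.
by move=> j k hj hk; rewrite hB ?mul0r //; lia.
Qed.

Lemma mmulA_ul A B D a d : ubw A a -> lbw D d -> mmul (mmul A B) D = mmul A (mmul B D).
Proof.
move=> hA hD; apply: funext => n; apply: funext => m.
apply: (mmulA_gen (J:=n + a + 1) (K:=m + d + 1)).
  by move=> j hj; apply: hA; lia.
by move=> j k hj hk; rewrite hD ?mulr0 //; lia.
Qed.

Lemma mmulA_ll A B D b d : lbw B b -> lbw D d -> mmul (mmul A B) D = mmul A (mmul B D).
Proof.
move=> hB hD.
have h : trm (mmul (mmul A B) D) = trm (mmul A (mmul B D)).
  rewrite !trm_mmul -(mmulA_uu _ (ubw_trm hD) (ubw_trm hB)).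
  by rewrite -trm_mmul.
by rewrite -[LHS]/(trm (trm (mmul (mmul A B) D))) h.
Qed.

Lemma mmul1l A : mmul (idm R) A = A.
Proof.
apply: funext => n; apply: funext => m; rewrite mmulE (fsumE (K:=n.+1)).
  rewrite big_ord_recr /= /idm eqxx mul1r big1 ?add0r // => j _.
  by rewrite gtn_eqF ?mul0r.
by move=> j hj; rewrite /idm ltn_eqF ?mul0r.
Qed.

Lemma mmul1r A : mmul A (idm R) = A.
Proof.
apply: funext => n; apply: funext => m; rewrite mmulE (fsumE (K:=m.+1)).
  rewrite big_ord_recr /= /idm eqxx mulr1 big1 ?add0r // => j _.
  by rewrite ltn_eqF ?mulr0.
by move=> j hj; rewrite /idm gtn_eqF ?mulr0.
Qed.


Section LTInv.
Variables (A : imat R) (hA : ubw A 0) (hd : forall n, A n n != 0).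

Lemma unit_trunc K : trunc A K \in unitmx.
Proof.
rewrite unitmxE det_trig.
  by rewrite unitfE; apply/prodf_neq0 => i _; rewrite mxE; exact: hd.
by apply/is_trig_mxP => i j lt; rewrite mxE hA //; lia.
Qed.

Let vv K n m := invmx (trunc A K.+1) (inord n) (inord m).

Lemma vv_r K i j : (i <= K)%N -> (j <= K)%N ->
  \sum_(k < K.+1) A i k * vv K k j = (i == j)%:R.
Proof.
move=> hi hj.
have e := congr1 (fun M : 'M[C]_K.+1 => M (inord i) (inord j)) (mulmxV (unit_trunc K.+1)).
rewrite /= !mxE in e.
have e2 : (inord i == inord j :> 'I_K.+1) = (i == j) by rewrite -(inj_eq val_inj) /= !inordK.
rewrite e2 in e; rewrite -e; apply: eq_bigr => k _; rewrite mxE inordK //.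
by rewrite /vv inord_val.
Qed.

Lemma vv_l K i j : (i <= K)%N -> (j <= K)%N ->
  \sum_(k < K.+1) vv K i k * A k j = (i == j)%:R.
Proof.
move=> hi hj.
have e := congr1 (fun M : 'M[C]_K.+1 => M (inord i) (inord j)) (mulVmx (unit_trunc K.+1)).
rewrite /= !mxE in e.
have e2 : (inord i == inord j :> 'I_K.+1) = (i == j) by rewrite -(inj_eq val_inj) /= !inordK.
rewrite e2 in e; rewrite -e; apply: eq_bigr => k _; rewrite [trunc _ _ _ _]mxE inordK //.
by rewrite /vv inord_val.
Qed.

Lemma vv_trig K i j : (i < j)%N -> (j <= K)%N -> vv K i j = 0.
Proof.
move=> hij hj.
suff : forall p i, (i <= p)%N -> (i < j)%N -> vv K i j = 0 by move/(_ i i (leqnn i)); apply.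
elim=> [|p IH] i0 hi0 hij0.
- case: i0 hi0 hij0 => [|i0] // _ hij0.
  have e := vv_r (i:=0) (j:=j) (K:=K) (leq0n _) hj.
  rewrite (ltn_eqF hij0) big_ord_recl big1 ?addr0 in e; last first.
    by move=> k _; rewrite lift0 hA ?mul0r //=; lia.
  move: e => /eqP; rewrite mulf_eq0 => /orP[|/eqP //].
  by rewrite (negbTE (hd 0)).
- have hi0K : (i0 <= K)%N by lia.
  have e := vv_r (i:=i0) (j:=j) (K:=K) hi0K hj.
  have hlt : (i0 < K.+1)%N by lia.
  rewrite (ltn_eqF hij0) (bigD1 (Ordinal hlt)) //= in e.
  rewrite big1 ?addr0 in e; last first.
    move=> k hk; have hk' : (k : nat) != i0.
      by apply/negP => /eqP h; move/negP: hk; apply; apply/eqP/val_inj.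
    case: (ltngtP k i0) hk' => // hk2 _.
      by rewrite (IH k) ?mulr0 //; lia.
    by rewrite hA ?mul0r //; lia.
  by move: e => /eqP; rewrite mulf_eq0 (negbTE (hd i0)) /= => /eqP.
Qed.

Lemma vv_cons K K' n m : (n <= K)%N -> (m <= K)%N -> (K <= K')%N -> vv K n m = vv K' n m.
Proof.
move=> hn hm hK.
pose W := \matrix_(i < K.+1, j < K.+1) vv K' i j.
have hW : trunc A K.+1 *m W = 1%:M.
  apply/matrixP => i j; rewrite !mxE.
  transitivity (\sum_(k < K'.+1) A i k * vv K' k j).
    rewrite -(big_mkord xpredT (fun k => A i k * vv K' k j)).
    rewrite (big_cat_nat (n:=K.+1)) //= big_mkord [X in _ + X]big1_seq ?addr0.
      by apply: eq_bigr => k _; rewrite !mxE.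
    move=> k /andP[_]; rewrite mem_index_iota => /andP[h _].
    by rewrite hA ?mul0r //; have := ltn_ord i; lia.
  have hi := ltn_ord i; have hj := ltn_ord j.
  rewrite vv_r; try lia.
  by rewrite -(inj_eq val_inj).
have : invmx (trunc A K.+1) = W.
  by rewrite -[RHS](mulKmx (unit_trunc K.+1)) hW mulmx1.
move=> e; rewrite /vv e mxE !inordK //.
Qed.

Lemma ltinvE K n m : (n <= K)%N -> (m <= K)%N -> ltinv A n m = vv K n m.
Proof.
move=> hn hm; rewrite -(vv_cons (K := maxn n m)) //; try lia.
Qed.

Lemma ubw_ltinv : ubw (ltinv A) 0.
Proof.
move=> n m h; rewrite (ltinvE (K:=m)) //; try lia.
by apply: vv_trig; lia.
Qed.

Lemma mmul_ltinv_r : mmul A (ltinv A) = idm R.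
Proof.
apply: funext => n; apply: funext => m.
rewrite (@mmulE_u _ _ 0 n m (maxn n m).+1) //; last by lia.
rewrite /idm -(@vv_r (maxn n m) n m); try lia.
by apply: eq_bigr => j _; rewrite (ltinvE (K:=maxn n m)) //; have := ltn_ord j; lia.
Qed.

Lemma mmul_ltinv_l : mmul (ltinv A) A = idm R.
Proof.
apply: funext => n; apply: funext => m.
rewrite (@mmulE_u _ _ 0 n m (maxn n m).+1); [|exact: ubw_ltinv|lia].
rewrite /idm -(@vv_l (maxn n m) n m); try lia.
by apply: eq_bigr => j _; rewrite (ltinvE (K:=maxn n m)) //; have := ltn_ord j; lia.
Qed.

Lemma ltinv_diag n : ltinv A n n * A n n = 1.
Proof.
transitivity (mmul (ltinv A) A n n); last by rewrite mmul_ltinv_l /idm eqxx.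
rewrite (@mmulE_u _ _ 0 n n n.+1); [|exact: ubw_ltinv|lia].
rewrite big_ord_recr /= big1 ?add0r // => j _.
by rewrite hA ?mulr0 //=; have := ltn_ord j; lia.
Qed.
End LTInv.
Definition cv (x : ivec R) : imat R := fun j _ => x j.

Lemma mvmulE A x n : mvmul A x n = fsum (fun j => A n j * x j).
Proof. by []. Qed.

Lemma mvmulA A B x a b : ubw A a -> ubw B b -> mvmul A (mvmul B x) = mvmul (mmul A B) x.
Proof.
move=> hA hB; apply: funext => n.
change (mmul A (mmul B (cv x)) n 0%N = mmul (mmul A B) (cv x) n 0%N).
by rewrite (mmulA_uu _ hA hB).
Qed.

Lemma mvmulZ A (x : ivec R) c a : ubw A a -> mvmul A (fun j => c * x j) = fun n => c * mvmul A x n.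
Proof.
move=> hA; apply: funext => n; rewrite !mvmulE !(fsumE (K := n + a + 1)).
- by rewrite mulr_sumr; apply: eq_bigr => j _; rewrite mulrCA.
- by move=> j hj; rewrite hA ?mul0r //; lia.
- by move=> j hj; rewrite hA ?mul0r //; lia.
Qed.

Lemma LamE n m : Lam R n m = (m == n.+1)%:R.
Proof. by []. Qed.

Lemma ubw_Lam : ubw (Lam R) 1.
Proof. by move=> n m h; rewrite /Lam; case: eqP => // e; lia. Qed.
Lemma lbw_Lam : lbw (Lam R) 0.
Proof. by move=> n m h; rewrite /Lam; case: eqP => // e; lia. Qed.

Lemma mpowLam i : mpow (Lam R) i = fun n m => (m == (n + i)%N)%:R.
Proof.
elim: i => [|i IH].
  by apply: funext => n; apply: funext => m; rewrite /mpow /= /idm addn0 eq_sym.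
apply: funext => n; apply: funext => m.
change (mmul (Lam R) (mpow (Lam R) i) n m = (m == (n + i.+1)%N)%:R).
rewrite (@mmulE_u _ _ 1 n m n.+2); [|exact: ubw_Lam|lia].
rewrite IH.
under eq_bigr do rewrite LamE.
rewrite (@sum_ord_only _ (Ordinal (ltnSn n.+1))) /= ?eqxx ?mul1r ?addSnnS // => j hj.
by rewrite (negbTE hj) mul0r.
Qed.

Lemma ubw_mpowLam i : ubw (mpow (Lam R) i) i.
Proof. by move=> n m h; rewrite mpowLam; case: eqP => // e; lia. Qed.
Lemma lbw_mpowLam i : lbw (mpow (Lam R) i) 0.
Proof. by move=> n m h; rewrite mpowLam; case: eqP => // e; lia. Qed.

Lemma ThLE (p : {poly C}) n m :
  polymx p (Lam R) n m = \sum_(i < size p) p`_i * (m == (n + i)%N)%:R.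
Proof. rewrite /polymx. apply: eq_bigr => i _. by rewrite mpowLam. Qed.

Lemma ubw_ThL (p : {poly C}) N : size p = N.+1 -> ubw (polymx p (Lam R)) N.
Proof.
move=> hs n m h; rewrite ThLE big1 // => i _.
by case: eqP => [e|_]; [exfalso; have := ltn_ord i; lia | rewrite mulr0].
Qed.

Lemma lbw_ThL (p : {poly C}) : lbw (polymx p (Lam R)) 0.
Proof.
move=> n m h; rewrite ThLE big1 // => i _.
by case: eqP => [e|_]; [exfalso; lia | rewrite mulr0].
Qed.

Lemma ThL_Xv (p : {poly C}) z : mvmul (polymx p (Lam R)) (Xv z) = fun n => p.[z] * z ^+ n.
Proof.
apply: funext => n; rewrite mvmulE (fsumE (K := n + size p)); last first.
  move=> j hj; rewrite ThLE big1 ?mul0r // => i _.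
  by case: eqP => [e|_]; [exfalso; have := ltn_ord i; lia | rewrite mulr0].
under eq_bigr do rewrite ThLE mulr_suml.
rewrite exchange_big /= horner_coef mulr_suml; apply: eq_bigr => i _.
transitivity (p`_i * \sum_(j < n + size p) ((j : nat) == (n + i)%N)%:R * z ^+ j).
  by rewrite mulr_sumr; apply: eq_bigr => j _; rewrite -mulrA.
have hlt : (n + i < n + size p)%N by rewrite ltn_add2l.
rewrite (@sum_ord_only _ (Ordinal hlt)) /=; last by move=> j hj; rewrite (negbTE hj) mul0r.
rewrite eqxx mul1r exprD. ring.
Qed.

Lemma ubw_pascal : ubw (pascal R) 0.
Proof. by move=> n m h; rewrite /pascal bin_small //; lia. Qed.
Lemma pascal_diag n : pascal R n n != 0.
Proof. by rewrite /pascal binn oner_neq0. Qed.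

Lemma pascal_Xv x : mvmul (pascal R) (Xv x) = Xv (x + 1).
Proof.
apply: funext => n; rewrite mvmulE (fsumE (K := n.+1)); last first.
  by move=> j hj; rewrite ubw_pascal ?mul0r //; lia.
by rewrite /Xv exprD1n; apply: eq_bigr => j _; rewrite /pascal mulr_natl.
Qed.

Lemma Pinv_Xv z : mvmul (ltinv (pascal R)) (Xv z) = Xv (z - 1).
Proof.
have -> : Xv z = mvmul (pascal R) (Xv (z - 1)) by rewrite pascal_Xv subrK.
rewrite (mvmulA _ (ubw_ltinv ubw_pascal pascal_diag) ubw_pascal).
rewrite (mmul_ltinv_l ubw_pascal pascal_diag).
apply: funext => n; rewrite mvmulE (fsumE (K := n.+1)).
  by rewrite big_ord_recr /= /idm eqxx mul1r big1 ?add0r // => j _; rewrite gtn_eqF ?mul0r.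
by move=> j hj; rewrite /idm ltn_eqF ?mul0r.
Qed.

Lemma ubw_ThL' (p : {poly C}) : ubw (polymx p (Lam R)) (size p).
Proof.
move=> n m h; rewrite ThLE big1 // => i _.
by case: eqP => [e|_]; [exfalso; have := ltn_ord i; lia | rewrite mulr0].
Qed.

Lemma ubw_sum q (c : 'I_q -> C) (F : 'I_q -> imat R) u :
  (forall i, ubw (F i) u) -> ubw (fun n m => \sum_i c i * F i n m) u.
Proof. by move=> hF n m h; rewrite big1 // => i _; rewrite hF ?mulr0. Qed.

Lemma mmul_suml q (c : 'I_q -> C) (F : 'I_q -> imat R) u B :
  (forall i, ubw (F i) u) ->
  mmul (fun n m => \sum_i c i * F i n m) B = fun n m => \sum_i c i * mmul (F i) B n m.
Proof.
move=> hF; apply: funext => n; apply: funext => m.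
rewrite (@mmulE_u _ _ u n m (n + u).+1 (ubw_sum c hF)) //.
under eq_bigr do rewrite mulr_suml.
rewrite exchange_big /=; apply: eq_bigr => i _.
rewrite (@mmulE_u _ _ u n m (n + u).+1 (hF i)) // mulr_sumr.
by apply: eq_bigr => j _; rewrite mulrA.
Qed.

Lemma mmul_sumr q (c : 'I_q -> C) (F : 'I_q -> imat R) a A :
  ubw A a ->
  mmul A (fun n m => \sum_i c i * F i n m) = fun n m => \sum_i c i * mmul A (F i) n m.
Proof.
move=> hA; apply: funext => n; apply: funext => m.
rewrite (@mmulE_u _ _ a n m (n + a).+1 hA) //.
under eq_bigr do rewrite mulr_sumr.
rewrite exchange_big /=; apply: eq_bigr => i _.
rewrite (@mmulE_u _ _ a n m (n + a).+1 hA) // mulr_sumr.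
by apply: eq_bigr => j _; rewrite mulrCA.
Qed.

Lemma lu_ubw (S : imat R) : lower_unitriangular S -> ubw S 0.
Proof. by move=> hS n m h; apply: (hS n m).1; lia. Qed.
Lemma lu_diag (S : imat R) : lower_unitriangular S -> forall n, S n n != 0.
Proof. by move=> hS n; rewrite (hS n n).2 oner_neq0. Qed.

Section Jac.
Variables (S : imat R) (hS0 : ubw S 0) (hSd : forall n, S n n != 0).
Let Si := ltinv S.
Let hSi : ubw Si 0 := ubw_ltinv hS0 hSd.

Lemma mpowT i : mpow (Jacobi S) i = mmul (mmul S (mpow (Lam R) i)) Si.
Proof.
elim: i => [|i IH].
  by rewrite /mpow /= mmul1r mmul_ltinv_r.
change (mmul (Jacobi S) (mpow (Jacobi S) i) = mmul (mmul S (mmul (Lam R) (mpow (Lam R) i))) Si).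
have hL : ubw (mpow (Lam R) i) i := ubw_mpowLam (i:=i).
rewrite IH /Jacobi.
rewrite (mmulA_uu _ (ubw_mmul hS0 ubw_Lam) hSi).
rewrite -(mmulA_uu _ hSi (ubw_mmul hS0 hL)).
rewrite -(mmulA_uu _ hSi hS0) mmul_ltinv_l // mmul1l.
rewrite (mmulA_uu _ hS0 ubw_Lam) -(mmulA_uu _ ubw_Lam hL).
by rewrite (mmulA_uu _ hS0 (ubw_mmul ubw_Lam hL)).
Qed.

Lemma polyT (p : {poly C}) : polymx p (Jacobi S) = mmul (mmul S (polymx p (Lam R))) Si.
Proof.
have -> : polymx p (Jacobi S) = fun n m => \sum_(i < size p) p`_i * mmul (mmul S (mpow (Lam R) i)) Si n m.
  apply: funext => n; apply: funext => m; rewrite /polymx.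
  by apply: eq_bigr => i _; rewrite mpowT.
rewrite -(@mmul_suml _ (fun i : 'I_(size p) => p`_i) (fun i => mmul S (mpow (Lam R) i)) (size p)).
  congr mmul.
  by rewrite (@mmul_sumr _ (fun i : 'I_(size p) => p`_i) (fun i => mpow (Lam R) i) 0 S hS0).
move=> i; apply: (ubw_le (a := 0 + i)); first by have := ltn_ord i; lia.
exact: ubw_mmul hS0 (@ubw_mpowLam i).
Qed.

End Jac.

Section Psi.
Variables (S : imat R) (hS0 : ubw S 0) (hSd : forall n, S n n != 0) (p : {poly C}).
Let Si := ltinv S.
Let hSi : ubw Si 0 := ubw_ltinv hS0 hSd.
Let Pi := ltinv (pascal R).
Let hPi : ubw Pi 0 := ubw_ltinv ubw_pascal pascal_diag.
Definition Qm := mmul (ltinv (pascal R)) (polymx p (Lam R)).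
Let hThL : ubw (polymx p (Lam R)) (size p) := @ubw_ThL' p.
Lemma ubw_Qm : ubw Qm (0 + size p).
Proof. exact: ubw_mmul hPi hThL. Qed.

Lemma LF_eq : LFmatrix S p = mmul (mmul S Qm) Si.
Proof.
rewrite /LFmatrix /Piinv (polyT hS0 hSd).
have hX := ubw_mmul hS0 hThL.
rewrite (mmulA_uu _ (ubw_mmul hS0 hPi) hSi).
rewrite -(mmulA_uu _ hSi hX).
rewrite -(mmulA_uu _ hSi hS0) mmul_ltinv_l // mmul1l.
rewrite (mmulA_uu _ hS0 hPi) -(mmulA_uu _ hPi hThL).
by rewrite /Qm (mmulA_uu _ hS0 ubw_Qm).
Qed.

Lemma LF_ubw N : size p = N.+1 -> ubw (LFmatrix S p) N.
Proof.
move=> hs; rewrite LF_eq.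
have hQ : ubw Qm (0 + N) := ubw_mmul hPi (ubw_ThL hs).
apply: (ubw_le (a := 0 + (0 + N) + 0)); first by lia.
exact: ubw_mmul (ubw_mmul hS0 hQ) hSi.
Qed.

Lemma LF_typeII z : mvmul (LFmatrix S p) (typeII S z) = fun n => p.[z] * typeII S (z - 1) n.
Proof.
rewrite LF_eq /typeII.
have hSQ := ubw_mmul hS0 ubw_Qm.
rewrite (mvmulA _ (ubw_mmul hSQ hSi) hS0).
rewrite (mmulA_uu _ hSQ hSi) mmul_ltinv_l // mmul1r.
rewrite -(mvmulA _ hS0 ubw_Qm) /Qm -(mvmulA _ hPi hThL) ThL_Xv.
change (mvmul S (mvmul Pi (fun n => p.[z] * Xv z n)) = (fun n => p.[z] * mvmul S (Xv (z - 1)) n)).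
by rewrite (mvmulZ _ _ hPi) Pinv_Xv (mvmulZ _ _ hS0).
Qed.

End Psi.

Lemma sum_pairs k (f : nat -> C) :
  \sum_(j < k.*2) f j = \sum_(b < k) (f b.*2 + f b.*2.+1).
Proof.
elim: k => [|k IH]; first by rewrite !big_ord0.
rewrite doubleS !big_ord_recr /= IH -addrA.
by [].
Qed.

Lemma mvmul_lin A a (x y : ivec R) (c d : C) : ubw A a ->
  mvmul A (fun l => c * x l + d * y l) = fun n => c * mvmul A x n + d * mvmul A y n.
Proof.
move=> hA; apply: funext => n; rewrite !mvmulE !(fsumE (K := (n + a).+1)).
- rewrite !mulr_sumr -big_split /=; apply: eq_bigr => j _; ring.
- by move=> j hj; rewrite hA ?mul0r //; lia.
- by move=> j hj; rewrite hA ?mul0r //; lia.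
- by move=> j hj; rewrite hA ?mul0r //; lia.
Qed.

Section Umat.
Variables (s1 s2 : {poly C}) (M : nat).
Hypothesis hM : maxn (size s1) (size s2) = M.+1.

Definition sg (m : nat) := if odd m then s2 else s1.
Definition qm (m : nat) : {poly C} := sg m * ('X + 1%:P) ^+ m./2.
Definition Ux : imat R := fun m l => if odd m == odd l then (qm m)`_(l./2) else 0.

Lemma size_qm m : (size (qm m) <= m./2 + M + 1)%N.
Proof.
apply: leq_trans (size_polyMleq (sg m) (('X + 1%:P : {poly C}) ^+ m./2)) _.
have h1 : (size (sg m) <= M.+1)%N by rewrite -hM /sg; case: odd; lia.
have h2 := size_poly_exp_leq ('X + 1%:P : {poly C}) m./2.
have h3 : size ('X + 1%:P : {poly C}) = 2%N := size_XaddC 1.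
rewrite h3 /= mul1n in h2.
move: h1 h2; set a := size (sg m); set b := size ((_ : {poly C}) ^+ _) => h1 h2.
lia.
Qed.

Lemma ubw_Ux : ubw Ux (2 * M).
Proof.
move=> m l h; rewrite /Ux; case: eqP => // e.
apply: nth_default; apply: leq_trans (size_qm m) _.
have hm := odd_double_half m; have hl := odd_double_half l.
rewrite e in hm; case: (odd l) hm hl => /= hm hl; lia.
Qed.

Lemma Ux_pairs (x : ivec R) m : mvmul Ux x m =
  \sum_(b < (m./2 + M + 1)) (Ux m b.*2 * x b.*2 + Ux m b.*2.+1 * x b.*2.+1).
Proof.
rewrite mvmulE (fsumE (K := (m./2 + M + 1).*2)).
  exact: (sum_pairs _ (fun j => Ux m j * x j)).
move=> j hj; rewrite ubw_Ux ?mul0r //.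
have hm := odd_double_half m; case: (odd m) hm => /= hm; lia.
Qed.

Lemma Ux_X1 z : mvmul Ux (X1v z) = fun m => s1.[z] * X1v (z + 1) m.
Proof.
apply: funext => m; rewrite Ux_pairs /X1v /Ux.
case hm: (odd m).
  rewrite mulr0 big1 // => b _.
  by rewrite odd_double /= odd_double /= mulr0 mul0r addr0.
transitivity ((qm m).[z]).
  rewrite (horner_coef_wide z (size_qm m)).
  apply: eq_bigr => b _.
  by rewrite odd_double /= odd_double /= doubleK mulr0 addr0.
rewrite /qm /sg hm hornerM horner_exp hornerD hornerX hornerC.
by [].
Qed.
Lemma Ux_X2 z : mvmul Ux (X2v z) = fun m => s2.[z] * X2v (z + 1) m.
Proof.
apply: funext => m; rewrite Ux_pairs /X2v /Ux.
case hm: (odd m); last first.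
  rewrite mulr0 big1 // => b _.
  by rewrite /= !odd_double /= mulr0 mul0r addr0.
transitivity ((qm m).[z]).
  rewrite (horner_coef_wide z (size_qm m)).
  apply: eq_bigr => b _.
  by rewrite /= !odd_double /= uphalf_double mulr0 add0r.
rewrite /qm /sg hm hornerM horner_exp hornerD hornerX hornerC.
by [].
Qed.
End Umat.

Lemma fsumZ c (u : nat -> C) : fsum (fun j => c * u j) = c * fsum u.
Proof.
case: (eqVneq c 0) => [->|hc].
  by rewrite mul0r fsum0 // => j; rewrite mul0r.
case: (pselect (fin_supp u)) => [[K hK]|nf].
  rewrite (fsumE (K:=K) hK) (fsumE (K:=K)) ?mulr_sumr // => j hj.
  by rewrite hK ?mulr0.
have nf2 : ~ fin_supp (fun j => c * u j).
  move=> [K hK]; apply: nf; exists K => j hj; have := hK j hj.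
  by move/eqP; rewrite mulf_eq0 (negbTE hc) /= => /eqP.
rewrite /fsum; case: pselect => // _; case: pselect => // _.
by rewrite mulr0.
Qed.

Lemma mmulZl c A B : mmul (fun n m => c * A n m) B = fun n m => c * mmul A B n m.
Proof.
apply: funext => n; apply: funext => m; rewrite !mmulE -fsumZ.
by congr fsum; apply: funext => j; rewrite mulrA.
Qed.

Lemma trm_idm : trm (idm R) = idm R.
Proof. by apply: funext => n; apply: funext => m; rewrite /trm /idm eq_sym. Qed.

Lemma trunc_mmul A B K : ubw A 0 -> trunc (mmul A B) K = trunc A K *m trunc B K.
Proof.
move=> hA; apply/matrixP => i j; rewrite !mxE (@mmulE_u _ _ 0 i j K hA); last by have := ltn_ord i; lia.
by apply: eq_bigr => k _; rewrite !mxE.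
Qed.

Lemma diag_ubw A : diagonal_mx A -> ubw A 0.
Proof. by move=> h n m hm; apply: h; apply/eqP; lia. Qed.
Lemma diag_lbw A : diagonal_mx A -> lbw A 0.
Proof. by move=> h n m hm; apply: h; apply/eqP; lia. Qed.

Lemma lbw_ltinv_diag A : diagonal_mx A -> (forall n, A n n != 0) -> lbw (ltinv A) 0.
Proof.
move=> hA hd n m hm.
have hA0 := diag_ubw hA.
have e := congr1 (fun M : imat R => M n m) (mmul_ltinv_l hA0 hd).
rewrite /= /idm gtn_eqF in e; last by lia.
rewrite (@mmulE_u _ _ 0 n m n.+1) in e; [|exact: ubw_ltinv hA0 hd|lia].
have hlt : (m < n.+1)%N by lia.
rewrite (@sum_ord_only _ (Ordinal hlt)) /= in e; last first.
  by move=> j hj; rewrite hA ?mulr0 // eq_sym.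
by move/eqP: e; rewrite mulf_eq0 (negbTE (hd m)) orbF => /eqP.
Qed.

Lemma trm_ltinv_diag A : diagonal_mx A -> (forall n, A n n != 0) -> trm (ltinv A) = ltinv A.
Proof.
move=> hA hd; apply: funext => n; apply: funext => m; rewrite /trm.
case: (ltngtP n m) => h.
- by rewrite (lbw_ltinv_diag hA hd) ?(ubw_ltinv (diag_ubw hA) hd) //; lia.
- by rewrite (lbw_ltinv_diag hA hd (n:=n) (m:=m)) ?(ubw_ltinv (diag_ubw hA) hd) //; lia.
- by rewrite h.
Qed.

Section Assemble.
Variables (S St H Mom U : imat R) (p : {poly C}) (u : nat).
Hypotheses (hS0 : ubw S 0) (hSd : forall n, S n n != 0)
  (hSt0 : ubw St 0) (hStd : forall n, St n n != 0)
  (hH : diagonal_mx H) (hHd : forall n, H n n != 0)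
  (hMom : Mom = mmul (mmul (ltinv S) H) (trm (ltinv St)))
  (hU : ubw U u) (hPear : mmul (Qm p) Mom = mmul Mom (trm U)).
Let Si := ltinv S.
Let hSi : ubw Si 0 := ubw_ltinv hS0 hSd.
Let Sti := ltinv St.
Let hSti : ubw Sti 0 := ubw_ltinv hSt0 hStd.
Let Hi := ltinv H.
Let hH0 : ubw H 0 := diag_ubw hH.
Let hH1 : lbw H 0 := diag_lbw hH.
Let hHi0 : ubw Hi 0 := ubw_ltinv hH0 hHd.
Let hHi1 : lbw Hi 0 := lbw_ltinv_diag hH hHd.

Definition Psi2 := mmul (mmul (mmul (mmul H (trm Sti)) (trm U)) (trm St)) Hi.

Lemma Si_eq : mmul (mmul Mom (trm St)) Hi = Si.
Proof.
rewrite hMom (mmulA_ul _ (ubw_mmul hSi hH0) (lbw_trm hSt0)).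
rewrite -trm_mmul mmul_ltinv_r // trm_idm mmul1r.
by rewrite (mmulA_uu _ hSi hH0) mmul_ltinv_r // mmul1r.
Qed.

Lemma LF_Psi2 : LFmatrix S p = Psi2.
Proof.
rewrite (LF_eq hS0 hSd) -/Si -Si_eq.
have hSQ := ubw_mmul hS0 (@ubw_Qm p).
rewrite -(mmulA_ul _ hSQ hHi1) -(mmulA_ul _ hSQ (lbw_trm hSt0)).
rewrite (mmulA_uu _ hS0 (@ubw_Qm p)) hPear -(mmulA_ul _ hS0 (lbw_trm hU)).
rewrite hMom -(mmulA_uu _ hS0 (ubw_mmul hSi hH0)) -(mmulA_uu _ hS0 hSi).
by rewrite mmul_ltinv_r // mmul1l.
Qed.

Lemma lbw_Psi2 : lbw Psi2 u.
Proof.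
rewrite /Psi2.
have h := lbw_mmul (lbw_mmul (lbw_mmul (lbw_mmul hH1 (lbw_trm hSti)) (lbw_trm hU)) (lbw_trm hSt0)) hHi1.
apply: lbw_le h; lia.
Qed.

Let G := mmul Hi St.
Let hG : ubw G 0 := ubw_mmul hHi0 hSt0.

Lemma vm_mv (x : ivec R) B b m : lbw B b ->
  vmmul (mvmul G x) B m = mmul (trm (cv x)) (mmul (trm G) B) 0%N m.
Proof.
move=> hB.
change (mmul (trm (mmul G (cv x))) B 0%N m = mmul (trm (cv x)) (mmul (trm G) B) 0%N m).
by rewrite trm_mmul (mmulA_ll _ (lbw_trm hG) hB).
Qed.

Lemma trmG_Psi2 : mmul (trm G) Psi2 = mmul (mmul (trm U) (trm St)) Hi.
Proof.
have hX : lbw (mmul H (trm Sti)) (0 + 0) := lbw_mmul hH1 (lbw_trm hSti).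
have hAX : mmul (trm G) (mmul H (trm Sti)) = idm R.
  rewrite /G trm_mmul (trm_ltinv_diag hH hHd) -/Hi.
  rewrite (mmulA_ll _ hHi1 hX) -(mmulA_ll _ hH1 (lbw_trm hSti)).
  by rewrite mmul_ltinv_l // mmul1l -trm_mmul mmul_ltinv_l // trm_idm.
have hXU := lbw_mmul hX (lbw_trm hU).
have hXUT := lbw_mmul hXU (lbw_trm hSt0).
rewrite /Psi2 -(mmulA_ll _ hXUT hHi1) -(mmulA_ll _ hXU (lbw_trm hSt0)).
rewrite -(mmulA_ll _ hX (lbw_trm hU)) hAX mmul1l.
by [].
Qed.

Lemma typeI_gen (Xa : C -> ivec R) (c : C) z :
  mvmul U (Xa z) = (fun m => c * Xa (z + 1) m) ->
  forall m, typeI H St Xa (z + 1) m * c = vmmul (typeI H St Xa z) Psi2 m.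
Proof.
move=> hUX m.
rewrite /typeI -/Hi -/G (vm_mv _ _ lbw_Psi2) trmG_Psi2.
rewrite -(mmulA_ll _ (lbw_mmul (lbw_trm hU) (lbw_trm hSt0)) hHi1).
rewrite -(mmulA_ll _ (lbw_trm hU) (lbw_trm hSt0)).
have -> : mmul (trm (cv (Xa z))) (trm U) = fun n m => c * trm (cv (Xa (z + 1))) n m.
  by rewrite -trm_mmul; change (trm (cv (mvmul U (Xa z))) = fun n m => c * trm (cv (Xa (z + 1))) n m); rewrite hUX.
rewrite !mmulZl mulrC; congr (_ * _).
transitivity (trm (mmul G (cv (Xa (z + 1)))) 0%N m); first by [].
rewrite trm_mmul /G trm_mmul (trm_ltinv_diag hH hHd) -/Hi.
by rewrite (mmulA_ll _ (lbw_trm hSt0) hHi1).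
Qed.

End Assemble.

Definition reS (u : nat -> C) : R ^nat := fun k => complex.Re (u k).
Definition imS (u : nat -> C) : R ^nat := fun k => complex.Im (u k).
Definition cvs (u : nat -> C) := cvgn (series (reS u)) /\ cvgn (series (imS u)).
Lemma csumE u : csum u = limn (series (reS u)) +i* limn (series (imS u)).
Proof. by []. Qed.

Lemma Re_le_cmod (z : C) : `|complex.Re z| <= cmod z.
Proof.
rewrite /cmod -sqrtr_sqr ler_sqrt ?lerDl ?sqr_ge0 //.
by rewrite addr_ge0 ?sqr_ge0.
Qed.

Lemma Im_le_cmod (z : C) : `|complex.Im z| <= cmod z.
Proof.
rewrite /cmod -sqrtr_sqr ler_sqrt ?lerDr ?sqr_ge0 //.
by rewrite addr_ge0 ?sqr_ge0.
Qed.

Lemma abs_cvs u : abs_summable u -> cvs u.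
Proof.
move=> h; split; rewrite /reS /imS; apply: normed_cvg; apply: (series_le_cvg _ _ _ h).
- by move=> n; rewrite normr_ge0.
- by move=> n; rewrite /cmod sqrtr_ge0.
- by move=> n; exact: Re_le_cmod.
- by move=> n; rewrite normr_ge0.
- by move=> n; rewrite /cmod sqrtr_ge0.
- by move=> n; exact: Im_le_cmod.
Qed.

Lemma cvsD u v : cvs u -> cvs v ->
  cvs (fun k => u k + v k) /\ csum (fun k => u k + v k) = csum u + csum v.
Proof.
move=> [hu1 hu2] [hv1 hv2].
have e1 : reS (fun k => u k + v k) = reS u + reS v.
  rewrite addrfctE; apply: funext => k; rewrite /reS.
  by case: (u k) => a b; case: (v k) => c d.
have e2 : imS (fun k => u k + v k) = imS u + imS v.
  rewrite addrfctE; apply: funext => k; rewrite /imS.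
  by case: (u k) => a b; case: (v k) => c d.
split; first by split; rewrite /= ?e1 ?e2; exact: is_cvg_seriesD.
by rewrite !csumE e1 e2 !lim_seriesD.
Qed.

Lemma cvsZ c u : cvs u -> cvs (fun k => c * u k) /\ csum (fun k => c * u k) = c * csum u.
Proof.
move=> [hu1 hu2].
have e1 : reS (fun k => c * u k) = (complex.Re c) *: reS u - (complex.Im c) *: imS u.
  rewrite ?addrfctE ?opprfctE !scalrfctE; apply: funext => k; rewrite /reS /imS.
  by case: c => a b; case: (u k) => x y.
have e2 : imS (fun k => c * u k) = (complex.Re c) *: imS u + (complex.Im c) *: reS u.
  rewrite ?addrfctE ?opprfctE !scalrfctE; apply: funext => k; rewrite /reS /imS.
  by clear e1; case: c => a b; case: (u k) => x y.
split.
  by split; rewrite /= ?e1 ?e2; [apply: is_cvg_seriesB | apply: is_cvg_seriesD]; apply: is_cvg_seriesZ.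
have c1 := is_cvg_seriesZ (k:=complex.Re c) hu1.
have c2 := is_cvg_seriesZ (k:=complex.Im c) hu2.
have c3 := is_cvg_seriesZ (k:=complex.Re c) hu2.
have c4 := is_cvg_seriesZ (k:=complex.Im c) hu1.
rewrite !csumE e1 e2 lim_seriesB // lim_seriesD // !lim_seriesZ //.
by clear e1 e2 c1 c2 c3 c4; case: c.
Qed.

Lemma lim_series0 (f : R ^nat) : (forall k, f k = 0) -> cvgn (series f) /\ limn (series f) = 0.
Proof.
move=> hf; have e : series f = fun _ => 0.
  by apply: funext => n; rewrite /series /= big1.
by rewrite e; split; [exact: is_cvg_cst | exact: lim_cst].
Qed.

Lemma cvs0 : cvs (fun _ => 0 : C) /\ csum (fun _ => 0 : C) = 0.
Proof.
have h1 := @lim_series0 (reS (fun _ => 0 : C)) (fun k => erefl).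
have h2 := @lim_series0 (imS (fun _ => 0 : C)) (fun k => erefl).
split; first by split; [exact: h1.1 | exact: h2.1].
by rewrite csumE h1.2.
Qed.

Lemma csum_lin J (c : nat -> C) (F : nat -> nat -> C) :
  (forall j, (j < J)%N -> cvs (F j)) ->
  cvs (fun k => \sum_(j < J) c j * F j k) /\
  csum (fun k => \sum_(j < J) c j * F j k) = \sum_(j < J) c j * csum (F j).
Proof.
elim: J => [|J IH] hF.
  have -> : (fun k => \sum_(j < 0) c j * F j k) = fun _ => 0.
    by apply: funext => k; rewrite big_ord0.
  by rewrite big_ord0; exact: cvs0.
have [h1 h2] := IH (fun j hj => hF j (ltnW hj)).
have [h3 h4] := cvsZ (c J) (hF J (ltnSn J)).
have -> : (fun k => \sum_(j < J.+1) c j * F j k) =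
  fun k => \sum_(j < J) c j * F j k + c J * F J k.
  by apply: funext => k; rewrite big_ord_recr.
have [h5 h6] := cvsD h1 h3.
by split => //; rewrite h6 h2 h4 big_ord_recr.
Qed.

Lemma rshift (f : R ^nat) : cvgn (series f) ->
  cvgn (series (fun k => f k.+1)) /\ limn (series (fun k => f k.+1)) = limn (series f) - f 0%N.
Proof.
move=> hf.
have e : series (fun k => f k.+1) = (fun n => series f n.+1) - (fun _ => f 0%N).
  rewrite addrfctE opprfctE; apply: funext => n; rewrite /series /=.
  rewrite big_nat_recl //; ring.
have hc : ((fun n => series f n.+1) @ \oo --> limn (series f))%classic.
  by rewrite (cvg_shiftS (series f)).
have hB := cvgB hc (cvg_cst (f 0%N)).
rewrite e; split; first by apply/cvg_ex; eexists; apply: hB; typeclasses eauto.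
by apply: cvg_lim => //; apply: hB; typeclasses eauto.
Qed.

Lemma csum_shift u : cvs u -> u 0%N = 0 -> csum (fun k => u k.+1) = csum u.
Proof.
move=> [h1 h2] h0.
have [_ e1] := rshift h1; have [_ e2] := rshift h2.
rewrite !csumE.
have -> : reS (fun k => u k.+1) = (fun k => reS u k.+1) by [].
have -> : imS (fun k => u k.+1) = (fun k => imS u k.+1) by [].
rewrite e1 e2 /reS /imS h0 /=.
by rewrite !subr0.
Qed.

Section Pearson.
Variables (w1 w2 : nat -> C) (th s1 s2 : {poly C}) (M : nat).
Hypotheses (hsum : forall n m, abs_summable (moment_term w1 w2 n m))
  (hP1 : forall k, th.[(k.+1)%:R] * w1 k.+1 = s1.[k%:R] * w1 k)
  (hP2 : forall k, th.[(k.+1)%:R] * w2 k.+1 = s2.[k%:R] * w2 k)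
  (hth0 : th.[0] = 0) (hM : maxn (size s1) (size s2) = M.+1).

Lemma Qm_Xv x n : mvmul (Qm th) (Xv x) n = th.[x] * (x - 1) ^+ n.
Proof.
have hPi := ubw_ltinv ubw_pascal pascal_diag.
rewrite /Qm -(mvmulA _ hPi (@ubw_ThL' th)) ThL_Xv.
change (mvmul (ltinv (pascal R)) (fun n => th.[x] * Xv x n) n = th.[x] * (x - 1) ^+ n).
by rewrite (mvmulZ _ _ hPi) Pinv_Xv.
Qed.

Lemma pearson : mmul (Qm th) (moment w1 w2) = mmul (moment w1 w2) (trm (Ux s1 s2)).
Proof.
apply: funext => n; apply: funext => m.
pose f := fun k : nat => th.[k%:R] * ((k%:R - 1) ^+ n *
   (w1 k * X1v (k%:R : C) m + w2 k * X2v (k%:R : C) m)).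
pose K := (n + (0 + size th)).+1.
have hQ := @ubw_Qm th.
have hfk : forall k, \sum_(j < K) Qm th n j * moment_term w1 w2 j m k = f k.
  move=> k; rewrite /f /moment_term.
  transitivity ((\sum_(j < K) Qm th n j * (k%:R : C) ^+ j) *
     (w1 k * X1v (k%:R : C) m + w2 k * X2v (k%:R : C) m)).
    by rewrite mulr_suml; apply: eq_bigr => j _; rewrite mulrA.
  rewrite -(@fsumE (fun j => Qm th n j * Xv (k%:R : C) j) K); last first.
    by move=> j hj; rewrite hQ ?mul0r //; rewrite /K in hj; lia.
  rewrite -mvmulE Qm_Xv; ring.
have [hcL eL] := @csum_lin K (fun j => Qm th n j) (fun j => moment_term w1 w2 j m)
   (fun j _ => abs_cvs (@hsum j m)).
have hcf : cvs f.
  by have -> : f = (fun k => \sum_(j < K) Qm th n j * moment_term w1 w2 j m k)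
    by apply: funext => k; rewrite hfk.
have e1 : mmul (Qm th) (moment w1 w2) n m = csum f.
  rewrite (@mmulE_u _ _ (0 + size th) n m K hQ) //.
  have -> : f = (fun k => \sum_(j < K) Qm th n j * moment_term w1 w2 j m k)
    by apply: funext => k; rewrite hfk.
  by rewrite eL.
pose K' := (m + 2 * M).+1.
have hU := ubw_Ux hM.
have [hcR eR] := @csum_lin K' (fun l => Ux s1 s2 m l) (fun l => moment_term w1 w2 n l)
   (fun l _ => abs_cvs (@hsum n l)).
have e2 : mmul (moment w1 w2) (trm (Ux s1 s2)) n m = csum (fun k => f k.+1).
  rewrite (@mmulE_l _ _ (2 * M) n m K' (lbw_trm hU)) //.
  transitivity (\sum_(l < K') Ux s1 s2 m l * csum (moment_term w1 w2 n l)).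
    by apply: eq_bigr => l _; rewrite mulrC.
  rewrite -eR; congr csum; apply: funext => k.
  rewrite /moment_term.
  transitivity ((k%:R : C) ^+ n * mvmul (Ux s1 s2) (fun l => w1 k * X1v (k%:R : C) l + w2 k * X2v (k%:R : C) l) m).
    rewrite mvmulE (fsumE (K := K')); last first.
      by move=> l hl; rewrite hU ?mul0r //; rewrite /K' in hl; lia.
    rewrite mulr_sumr; apply: eq_bigr => l _; ring.
  rewrite (mvmul_lin _ _ _ _ hU) (Ux_X1 hM) (Ux_X2 hM) /f.
  have hk : ((k.+1)%:R : C) = k%:R + 1 by rewrite -natr1.
  have hP1' := hP1 k; have hP2' := hP2 k.
  rewrite hk in hP1' hP2' *.
  rewrite (_ : (k%:R + 1 - 1 : C) = k%:R); last by ring.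
  transitivity ((k%:R : C) ^+ n * ((th.[k%:R + 1] * w1 k.+1) * X1v (k%:R + 1 : C) m +
     (th.[k%:R + 1] * w2 k.+1) * X2v (k%:R + 1 : C) m)).
    rewrite hP1' hP2'; ring.
  ring.
rewrite e1 e2 csum_shift //.
by rewrite /f (_ : (0%:R : C) = 0) // hth0 mul0r.
Qed.
End Pearson.

Lemma H_nz (w1 w2 : nat -> C) (S St H : imat R) :
  (forall n, \det (trunc (moment w1 w2) n) != 0) ->
  lower_unitriangular S -> lower_unitriangular St -> diagonal_mx H ->
  moment w1 w2 = mmul (mmul (ltinv S) H) (trm (ltinv St)) ->
  forall n, H n n != 0.
Proof.
move=> hdet hS hSt hH hMom n.
have hS0 := lu_ubw hS; have hSd := lu_diag hS.
have hH0 := diag_ubw hH.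
have := hdet n.+1; rewrite hMom.
rewrite (trunc_mmul _ _ (ubw_mmul (ubw_ltinv hS0 hSd) hH0)).
rewrite (trunc_mmul _ _ (ubw_ltinv hS0 hSd)) !det_mulmx.
rewrite (det_trig (A := trunc H n.+1)); last first.
  by apply/is_trig_mxP => i j lt; rewrite mxE hH0 //; lia.
rewrite big_ord_recr /= mxE.
apply: contraNneq => ->.
by rewrite mulr0 mulr0 mul0r.
Qed.

End P1.

Unset Implicit Arguments.
Set Strict Implicit.

Theorem mainTheorem7 (R : realType) (w1 w2 : nat -> R[i])
  (S St H : imat R) (theta sigma1 sigma2 : {poly R[i]}) (N M : nat) :
  (* the moment series converge absolutely *)
  (forall n m, abs_summable (moment_term w1 w2 n m)) ->
  (* all leading principal minors of the moment matrix are nonzero *)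
  (forall n, \det (trunc (moment w1 w2) n) != 0) ->
  (* Gauss--Borel factorization  Mom = S^{-1} H Stilde^{-T} *)
  lower_unitriangular S -> lower_unitriangular St -> diagonal_mx H ->
  moment w1 w2 = mmul (mmul (ltinv S) H) (trm (ltinv St)) ->
  (* discrete Pearson equations *)
  (forall k, theta.[(k.+1)%:R] * w1 k.+1 = sigma1.[k%:R] * w1 k) ->
  (forall k, theta.[(k.+1)%:R] * w2 k.+1 = sigma2.[k%:R] * w2 k) ->
  theta.[0] = 0 ->
  size theta = N.+1 ->                          (* deg theta = N *)
  maxn (size sigma1) (size sigma2) = M.+1 ->    (* max(deg sigma1, deg sigma2) = M *)
  (* Psi is banded: lower bandwidth 2M, upper bandwidth N *)
  (forall n m, (m + 2 * M < n)%N -> LFmatrix S theta n m = 0) /\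
  (forall n m, (n + N < m)%N -> LFmatrix S theta n m = 0) /\
  (* theta(z) B(z-1) = Psi B(z) *)
  (forall z n, theta.[z] * typeII S (z - 1) n
               = mvmul (LFmatrix S theta) (typeII S z) n) /\
  (* (A^(1)(z+1))^T sigma1(z) = (A^(1)(z))^T Psi *)
  (forall z m, typeI H St (@X1v R) (z + 1) m * sigma1.[z]
               = vmmul (typeI H St (@X1v R) z) (LFmatrix S theta) m) /\
  (* (A^(2)(z+1))^T sigma2(z) = (A^(2)(z))^T Psi *)
  (forall z m, typeI H St (@X2v R) (z + 1) m * sigma2.[z]
               = vmmul (typeI H St (@X2v R) z) (LFmatrix S theta) m).
Proof.
move=> hsum hdet hS hSt hH hMom hP1 hP2 hth0 hN hM.
have hS0 := lu_ubw hS; have hSd := lu_diag hS.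
have hSt0 := lu_ubw hSt; have hStd := lu_diag hSt.
have hHd := H_nz hdet hS hSt hH hMom.
have hU := ubw_Ux hM.
have hPear := pearson hsum hP1 hP2 hth0 hM.
have hLF := LF_Psi2 hS0 hSd hSt0 hStd hH hHd hMom hU hPear.
split.
  move=> n m hnm; rewrite hLF.
  exact: (lbw_Psi2 hSt0 hStd hH hHd hU).
split; first by move=> n m h; exact: (LF_ubw hS0 hSd hN h).
split.
  by move=> z n; rewrite (LF_typeII hS0 hSd).
split.
  move=> z m; rewrite hLF.
  exact: (typeI_gen hSt0 hStd hH hHd hU (Ux_X1 hM z) m).
move=> z m; rewrite hLF.
exact: (typeI_gen hSt0 hStd hH hHd hU (Ux_X2 hM z) m).
Qed.
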